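(* Let $I\subset\mathbb{Z}$ be an interval of integers (with $|I|$ its number of elements), and let $a,b,q\in\mathbb{Z}$, $q\ge 1$, satisfy $\gcd(a,q)=1$ and: $b\in\mathbb{Z}$ arbitrary when $q$ is odd; $b$ even when $q\equiv 0 \pmod 4$; $b$ odd when $q\equiv 2\pmod 4$. Let $f(r)=\frac{a}{q}r^2+\frac{b}{q}r$. Then $$\Big|\sum_{k\in I}e^{2\pi i f(k)}\Big| = C\frac{|I|}{\sqrt q}+\mathcal{O}\big(\sqrt{q\ln q}\big),$$ for some number $C$ with $\frac12\le C\le\sqrt2$, where the implied constant in $\mathcal{O}$ is absolute. *)

(* Defs.v *)
From Stdlib Require Import Reals ZArith List.
From Coquelicot Require Import Coquelicot.
Open Scope R_scope.

Definition e2pi (x : R) : C := (cos (2 * PI * x), sin (2 * PI * x)).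

(* Sum over the integer interval I = {m, m+1, ..., m+n-1} (|I| = n) of e(f(k)). *)
Definition expsum (f : Z -> R) (m : Z) (n : nat) : C :=
  fold_right Cplus (RtoC 0)
    (map (fun k : nat => e2pi (f (m + Z.of_nat k)%Z)) (seq 0 n)).

Definition quadf (a b q : Z) (r : Z) : R :=
  IZR a / IZR q * (IZR r) ^ 2 + IZR b / IZR q * IZR r.

(* Main.v *)
Require Import Defs.
From Stdlib Require Import Reals ZArith List Lra Lia Psatz Permutation Znumtheory.
From Coquelicot Require Import Coquelicot.
Open Scope R_scope.

Fixpoint sumN (g : nat -> C) (n : nat) : C :=
  match n with O => RtoC 0 | S n => Cplus (sumN g n) (g n) end.
Fixpoint sumR (g : nat -> R) (n : nat) : R :=
  match n with O => 0 | S n => sumR g n + g n end.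

Lemma foldC_app l1 l2 :
  fold_right Cplus (RtoC 0) (l1 ++ l2) = Cplus (fold_right Cplus (RtoC 0) l1) (fold_right Cplus (RtoC 0) l2).
Proof. induction l1; simpl. ring. rewrite IHl1. ring. Qed.
Lemma foldR_app l1 l2 :
  fold_right Rplus 0 (l1 ++ l2) = fold_right Rplus 0 l1 + fold_right Rplus 0 l2.
Proof. induction l1; simpl. ring. rewrite IHl1. ring. Qed.

Lemma sumN_fold g n : sumN g n = fold_right Cplus (RtoC 0) (map g (seq 0 n)).
Proof. induction n. reflexivity. cbn [sumN]. rewrite seq_S, map_app, foldC_app, IHn. simpl. f_equal. ring. Qed.
Lemma sumR_fold g n : sumR g n = fold_right Rplus 0 (map g (seq 0 n)).
Proof. induction n. reflexivity. cbn [sumR]. rewrite seq_S, map_app, foldR_app, IHn. simpl. f_equal. ring. Qed.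

Lemma expsum_sumN f m n : expsum f m n = sumN (fun k => e2pi (f (m + Z.of_nat k)%Z)) n.
Proof. rewrite sumN_fold. reflexivity. Qed.

Lemma sumN_ext g1 g2 n : (forall k, (k < n)%nat -> g1 k = g2 k) -> sumN g1 n = sumN g2 n.
Proof. induction n; intros H; simpl; auto. rewrite IHn by (intros; apply H; lia). rewrite H by lia. auto. Qed.
Lemma sumR_ext g1 g2 n : (forall k, (k < n)%nat -> g1 k = g2 k) -> sumR g1 n = sumR g2 n.
Proof. induction n; intros H; simpl; auto. rewrite IHn by (intros; apply H; lia). rewrite H by lia. auto. Qed.
Lemma sumR_le g1 g2 n : (forall k, (k < n)%nat -> g1 k <= g2 k) -> sumR g1 n <= sumR g2 n.
Proof. induction n; intros H; simpl. lra. pose proof (H n ltac:(lia)). pose proof (IHn ltac:(intros; apply H; lia)). lra. Qed.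
Lemma sumR_nonneg g n : (forall k, (k < n)%nat -> 0 <= g k) -> 0 <= sumR g n.
Proof. induction n; intros H; simpl. lra. pose proof (H n ltac:(lia)). pose proof (IHn ltac:(intros; apply H; lia)). lra. Qed.
Lemma sumR_const c n : sumR (fun _ => c) n = INR n * c.
Proof. induction n; simpl sumR. simpl; ring. rewrite IHn, S_INR. ring. Qed.

Lemma sumN_app g n1 n2 : sumN g (n1 + n2) = Cplus (sumN g n1) (sumN (fun k => g (n1 + k)%nat) n2).
Proof. induction n2; simpl. rewrite Nat.add_0_r. ring. rewrite Nat.add_succ_r. simpl. rewrite IHn2. ring. Qed.
Lemma sumR_app g n1 n2 : sumR g (n1 + n2) = sumR g n1 + sumR (fun k => g (n1 + k)%nat) n2.
Proof. induction n2; simpl. rewrite Nat.add_0_r. ring. rewrite Nat.add_succ_r. simpl. rewrite IHn2. ring. Qed.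

Lemma sumN_plus g1 g2 n : sumN (fun k => Cplus (g1 k) (g2 k)) n = Cplus (sumN g1 n) (sumN g2 n).
Proof. induction n; simpl. ring. rewrite IHn. ring. Qed.
Lemma sumN_mult_l c g n : Cmult c (sumN g n) = sumN (fun k => Cmult c (g k)) n.
Proof. induction n; simpl. ring. rewrite <- IHn. ring. Qed.
Lemma sumN_mult_r c g n : Cmult (sumN g n) c = sumN (fun k => Cmult (g k) c) n.
Proof. induction n; simpl. ring. rewrite <- IHn. ring. Qed.
Lemma sumN_conj g n : Cconj (sumN g n) = sumN (fun k => Cconj (g k)) n.
Proof. induction n; simpl. unfold Cconj, RtoC; simpl; f_equal; ring. rewrite Cplus_conj, IHn. auto. Qed.
Lemma sumN_zero n : sumN (fun _ => RtoC 0) n = RtoC 0.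
Proof. induction n; simpl; auto. rewrite IHn. ring. Qed.
Lemma sumN_swap (g : nat -> nat -> C) n1 n2 :
  sumN (fun i => sumN (fun j => g i j) n2) n1 = sumN (fun j => sumN (fun i => g i j) n1) n2.
Proof. induction n1; simpl. rewrite sumN_zero. auto. rewrite IHn1, <- sumN_plus. auto. Qed.
Lemma sumN_tri g n : Cmod (sumN g n) <= sumR (fun k => Cmod (g k)) n.
Proof. induction n; simpl. rewrite Cmod_0. lra. eapply Rle_trans. apply Cmod_triangle. lra. Qed.
Lemma sumN_const c n : sumN (fun _ => c) n = Cmult (RtoC (INR n)) c.
Proof. induction n; simpl sumN. simpl. ring. rewrite IHn, S_INR. rewrite RtoC_plus. ring. Qed.

Lemma e_add x y : e2pi (x + y) = Cmult (e2pi x) (e2pi y).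
Proof. unfold e2pi, Cmult; simpl. rewrite Rmult_plus_distr_l, cos_plus, sin_plus. f_equal; ring. Qed.

Lemma e_nat n : e2pi (INR n) = RtoC 1.
Proof. unfold e2pi, RtoC. pose proof (cos_period 0 n). pose proof (sin_period 0 n).
  rewrite Rplus_0_l, cos_0 in H. rewrite Rplus_0_l, sin_0 in H0.
  replace (2 * PI * INR n) with (2 * INR n * PI) by ring. rewrite H, H0. auto. Qed.

Lemma e_opp x : e2pi (- x) = Cconj (e2pi x).
Proof. unfold e2pi, Cconj; simpl. replace (2 * PI * - x) with (- (2 * PI * x)) by ring. rewrite cos_neg, sin_neg. auto. Qed.

Lemma e_int z : e2pi (IZR z) = RtoC 1.
Proof. destruct z. simpl. unfold e2pi, RtoC. rewrite Rmult_0_r, cos_0, sin_0. auto.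
  rewrite <- positive_nat_Z, <- INR_IZR_INZ. apply e_nat.
  rewrite <- Pos2Z.opp_pos, opp_IZR, e_opp, <- positive_nat_Z, <- INR_IZR_INZ, e_nat.
  unfold Cconj, RtoC; simpl. f_equal; ring. Qed.

Lemma e_mod x : Cmod (e2pi x) = 1.
Proof. unfold Cmod, e2pi; cbn [fst snd]. pose proof (sin2_cos2 (2*PI*x)) as H. unfold Rsqr in H. replace (cos (2 * PI * x) ^ 2 + sin (2 * PI * x) ^ 2) with 1 by nra. apply sqrt_1. Qed.

Lemma e_conj_mul x y : Cmult (e2pi x) (Cconj (e2pi y)) = e2pi (x - y).
Proof. unfold Rminus. rewrite e_add, e_opp. auto. Qed.

Lemma e_shift_int x z : e2pi (x + IZR z) = e2pi x.
Proof. rewrite e_add, e_int. ring. Qed.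

Lemma e_minus1_sq x : Cmod (Cminus (e2pi x) (RtoC 1)) ^ 2 = 4 * sin (PI * x) ^ 2.
Proof. unfold Cmod, e2pi, Cminus, Cplus, Copp, RtoC; cbn [fst snd].
  rewrite pow2_sqrt. 2: apply Rplus_le_le_0_compat; apply pow2_ge_0.
  replace (2 * PI * x) with (2 * (PI * x)) by ring. rewrite cos_2a_sin, sin_2a.
  pose proof (sin2_cos2 (PI*x)) as H. unfold Rsqr in H. ring_simplify. nra. Qed.
Lemma PI_gt3 : 3 < PI. Proof. pose proof PI2_3_2. lra. Qed.
Lemma sin_lb_half x : 0 <= x <= 1/2 -> x <= sin (PI * x).
Proof. intros [H0 H1]. pose proof PI_gt3. pose proof PI_4.
  set (a := PI * x). assert (0 <= a <= 2) by (unfold a; nra).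
  destruct (SIN a) as [Hs _]; try lra.
  assert (E: sin_lb a = a - a^3/6 + a^5/120 - a^7/5040) by (unfold sin_lb, sin_approx, sin_term; simpl; field). rewrite E in Hs. 
  assert (a*a <= 4) by nra.
  assert (0 <= a ^ 5 / 120 - a^7/5040). { assert (a^7 = a^5 * (a*a)) by ring. assert (0 <= a^5) by (apply pow_le; lra). nra. }
  assert (a - a^3/6 >= a / 3). { assert (a^3 = a * (a*a)) by ring. nra. }
  assert (a / 3 >= x) by (unfold a; nra).
  lra. Qed.
Lemma sin_lb01 x : 0 <= x <= 1 -> x * (1 - x) <= sin (PI * x).
Proof. intros Hx. destruct (Rle_lt_dec x (1/2)).
  pose proof (sin_lb_half x ltac:(lra)). nra.
  rewrite <- sin_PI_x. replace (PI - PI * x) with (PI * (1 - x)) by ring.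
  pose proof (sin_lb_half (1-x) ltac:(lra)). nra. Qed.
Lemma e_lb x : 0 <= x <= 1 -> 2 * x * (1 - x) <= Cmod (Cminus (e2pi x) (RtoC 1)).
Proof. intros Hx. pose proof (sin_lb01 x Hx). pose proof (e_minus1_sq x).
  pose proof (Cmod_ge_0 (Cminus (e2pi x) (RtoC 1))).
  assert (0 <= x * (1-x)) by nra.
  set (c := Cmod _) in *. nra. Qed.
Lemma linsum a b n : Cmult (Cminus (e2pi a) (RtoC 1)) (sumN (fun i => e2pi (a * INR i + b)) n)
   = Cminus (e2pi (a * INR n + b)) (e2pi b).
Proof. induction n; cbn [sumN]. simpl INR. rewrite Rmult_0_r, Rplus_0_l. ring.
  rewrite Cmult_plus_distr_l, IHn, S_INR. replace (a * (INR n + 1) + b) with (a + (a * INR n + b)) by ring.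
  rewrite (e_add a (a * INR n + b)). ring. Qed.

Lemma geo_bound a b n : 0 < Cmod (Cminus (e2pi a) (RtoC 1)) ->
  Cmod (sumN (fun i => e2pi (a * INR i + b)) n) <= 2 / Cmod (Cminus (e2pi a) (RtoC 1)).
Proof. intros H. set (c := Cmod _) in *. set (S := sumN _ n).
  assert (c * Cmod S <= 2). { unfold c. rewrite <- Cmod_mult. unfold S. rewrite linsum.
    unfold Cminus. eapply Rle_trans. apply Cmod_triangle. rewrite Cmod_opp, !e_mod. lra. }
  apply (Rmult_le_reg_l c); auto. unfold Rdiv. rewrite <- Rmult_assoc, (Rmult_comm c 2), Rmult_assoc, Rinv_r by lra. lra. Qed.

Lemma interval_sum (g : nat -> C) A B L :
  sumN (fun l => if andb (Nat.leb A l) (Nat.ltb l B) then g l else RtoC 0) L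
  = sumN (fun i => g (A + i)%nat) (Nat.min B L - A).
Proof. induction L; cbn [sumN]. replace (Nat.min B 0 - A)%nat with 0%nat by lia. reflexivity.
  rewrite IHL. destruct (Nat.leb A L) eqn:E1; destruct (Nat.ltb L B) eqn:E2; simpl andb;
  apply Nat.leb_le in E1 || apply Nat.leb_gt in E1; apply Nat.ltb_lt in E2 || apply Nat.ltb_ge in E2.
  - replace (Nat.min B (S L) - A)%nat with (S (Nat.min B L - A)) by lia. cbn [sumN]. f_equal. f_equal. lia.
  - replace (Nat.min B (S L) - A)%nat with (Nat.min B L - A)%nat by lia. ring.
  - replace (Nat.min B (S L) - A)%nat with (Nat.min B L - A)%nat by lia. ring.
  - replace (Nat.min B (S L) - A)%nat with (Nat.min B L - A)%nat by lia. ring.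
Qed.

Lemma delta_sum (g : nat -> C) k0 n :
  sumN (fun k => if Nat.eqb k k0 then g k else RtoC 0) n = if Nat.ltb k0 n then g k0 else RtoC 0.
Proof. induction n; cbn [sumN]. reflexivity. rewrite IHn.
  destruct (Nat.eqb_spec n k0); destruct (Nat.ltb_spec k0 n); destruct (Nat.ltb_spec k0 (S n));
  try lia; subst; ring. Qed.

Lemma quadf_diff a b q r h : IZR q <> 0 ->
  quadf a b q (r + h) - quadf a b q r
  = 2 * IZR a * IZR h / IZR q * IZR r + (IZR a * IZR h ^ 2 + IZR b * IZR h) / IZR q.
Proof. intros Hq. unfold quadf. rewrite plus_IZR. field. auto. Qed.

Lemma quadf_period a b q r t : IZR q <> 0 ->
  e2pi (quadf a b q (r + t * q)) = e2pi (quadf a b q r).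
Proof. intros Hq.
  replace (quadf a b q (r + t * q)) with (quadf a b q r + IZR (2 * a * r * t + a * t * t * q + b * t)).
  apply e_shift_int.
  unfold quadf. rewrite !plus_IZR, !mult_IZR. field. auto. Qed.

Lemma e_mod_reduce z d : (0 < d)%Z -> e2pi (IZR z / IZR d) = e2pi (IZR (z mod d) / IZR d).
Proof. intros Hd. rewrite (Z_div_mod_eq_full z d) at 1. rewrite plus_IZR, mult_IZR.
  replace ((IZR d * IZR (z / d) + IZR (z mod d)) / IZR d) with (IZR (z mod d) / IZR d + IZR (z/d)).
  apply e_shift_int. field. apply not_0_IZR. lia. Qed.

Lemma div_lt1 a b : 0 < b -> a < b -> a / b < 1.
Proof. intros. apply (Rmult_lt_reg_r b); auto. unfold Rdiv. rewrite Rmult_assoc, Rinv_l; lra. Qed.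

Lemma e_frac_lb z d : (0 < d)%Z -> (z mod d <> 0)%Z ->
  let x := IZR (z mod d) / IZR d in
  0 < x < 1 /\ 2 * x * (1 - x) <= Cmod (Cminus (e2pi (IZR z / IZR d)) (RtoC 1)).
Proof. intros Hd Hz x. pose proof (Z.mod_pos_bound z d Hd).
  assert (0 < x < 1). { unfold x. assert (0 < IZR d) by (apply IZR_lt; lia). assert (0 < IZR (z mod d)) by (apply IZR_lt; lia).
    assert (IZR (z mod d) < IZR d) by (apply IZR_lt; lia). split.
    apply Rdiv_lt_0_compat; lra. apply div_lt1; lra. }
  split; auto. rewrite e_mod_reduce by auto. apply e_lb. unfold x in *. lra. Qed.

Lemma Cmult_reg0 c s : c <> RtoC 0 -> Cmult c s = RtoC 0 -> s = RtoC 0.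
Proof. intros Hc H. replace s with (Cmult (Cinv c) (Cmult c s)). rewrite H. ring.
  rewrite Cmult_assoc, Cinv_l by auto. ring. Qed.

Lemma linsum_zero a b n : Cmod (Cminus (e2pi a) (RtoC 1)) <> 0 -> (exists z, a * INR n = IZR z) ->
  sumN (fun i => e2pi (a * INR i + b)) n = RtoC 0.
Proof. intros H [z Hz]. apply (Cmult_reg0 (Cminus (e2pi a) (RtoC 1))).
  intros E. apply H. rewrite E. apply Cmod_0.
  rewrite linsum, Hz, Rplus_comm, e_shift_int. ring. Qed.

Definition zz a b q m (k : nat) := e2pi (quadf a b q (m + Z.of_nat k)).

Lemma INR_pos_neq n : (1 <= n)%nat -> INR n <> 0.
Proof. intros. apply not_0_INR. lia. Qed.

Lemma zz_period a b qn m k j : (1 <= qn)%nat ->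
  zz a b (Z.of_nat qn) m (j * qn + k) = zz a b (Z.of_nat qn) m k.
Proof. intros H. unfold zz. replace (m + Z.of_nat (j * qn + k))%Z with ((m + Z.of_nat k) + Z.of_nat j * Z.of_nat qn)%Z by lia.
  apply quadf_period. rewrite <- INR_IZR_INZ. apply INR_pos_neq; auto. Qed.

Lemma zz_shift a b q m n k : zz a b q m (n + k) = zz a b q (m + Z.of_nat n) k.
Proof. unfold zz. f_equal. f_equal. lia. Qed.

Lemma sum_blocks a b qn m N : (1 <= qn)%nat ->
  sumN (zz a b (Z.of_nat qn) m) (N * qn) = Cmult (RtoC (INR N)) (sumN (zz a b (Z.of_nat qn) m) qn).
Proof. intros H. induction N. simpl. ring.
  replace (S N * qn)%nat with (N * qn + qn)%nat by lia. rewrite sumN_app, IHN.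
  rewrite (sumN_ext (fun k => zz a b (Z.of_nat qn) m (N * qn + k)) (zz a b (Z.of_nat qn) m) qn). rewrite S_INR, RtoC_plus. ring.
  intros k _. apply zz_period; auto. Qed.

Lemma decomp a b qn m N L : (1 <= qn)%nat ->
  sumN (zz a b (Z.of_nat qn) m) (N * qn + L) =
  Cplus (Cmult (RtoC (INR N)) (sumN (zz a b (Z.of_nat qn) m) qn))
        (sumN (zz a b (Z.of_nat qn) (m + Z.of_nat (N * qn))) L).
Proof. intros H. rewrite sumN_app, sum_blocks by auto. f_equal. apply sumN_ext. intros. apply zz_shift. Qed.

Lemma shift_inv a b qn m s : (1 <= qn)%nat ->
  sumN (fun k => zz a b (Z.of_nat qn) m (s + k)) qn = sumN (zz a b (Z.of_nat qn) m) qn.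
Proof. intros H. induction s. apply sumN_ext; auto.
  rewrite <- IHs. clear IHs.
  assert (E := sumN_app (fun k => zz a b (Z.of_nat qn) m (s + k)) 1 qn).
  replace (1 + qn)%nat with (S qn) in E by lia. cbn [sumN] in E.
  assert (zz a b (Z.of_nat qn) m (s + qn) = zz a b (Z.of_nat qn) m (s + 0)).
  { replace (s + qn)%nat with (1 * qn + s)%nat by lia. rewrite zz_period by auto. f_equal. lia. }
  rewrite H0 in E.
  assert (sumN (fun k => zz a b (Z.of_nat qn) m (s + (1 + k))) qn = sumN (fun k => zz a b (Z.of_nat qn) m (S s + k)) qn).
  { apply sumN_ext. intros. f_equal. lia. }
  rewrite H1 in E. 
  set (X := sumN (fun k => zz a b (Z.of_nat qn) m (S s + k)) qn) in *.
  set (c := zz a b (Z.of_nat qn) m (s + 0)) in *.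
  replace X with (Cminus (Cplus (Cplus (RtoC 0) c) X) c) by ring. rewrite <- E. ring. Qed.

Definition Cond (b q : Z) : Prop :=
  Z.odd q = true \/ (Z.modulo q 4 = 0%Z /\ Z.even b = true) \/ (Z.modulo q 4 = 2%Z /\ Z.odd b = true).

Lemma half_int a b q k : (1 <= q)%Z -> Z.gcd a q = 1%Z -> Cond b q -> (0 <= k < q)%Z -> (q | 2 * k)%Z ->
  exists c w, (2 * k = c * q /\ a * k * k + b * k = w * q)%Z.
Proof. intros Hq Hg Hc Hk [c Hcq].
  assert (c = 0 \/ c = 1)%Z as [-> | ->] by nia.
  - exists 0%Z, 0%Z. assert (k = 0)%Z by lia. subst. lia.
  - exists 1%Z. destruct Hc as [Ho | [[H4 Hb] | [H4 Hb]]].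
    + apply Z.odd_spec in Ho. destruct Ho. lia.
    + apply Z.even_spec in Hb. destruct Hb as [u Hu]. assert (exists v, k = 2 * v)%Z as [v Hv].
      { exists (k / 2)%Z. Z.to_euclidean_division_equations. lia. }
      exists (a * v + u)%Z. subst. split; ring_simplify; lia.
    + apply Z.odd_spec in Hb. destruct Hb as [u Hu]. assert (exists v, k = 2 * v + 1)%Z as [v Hv].
      { exists (k / 2)%Z. Z.to_euclidean_division_equations. lia. }
      destruct (Z.Even_or_Odd a) as [[t Ht] | [t Ht]].
      * exfalso. assert (2 | Z.gcd a q)%Z. { apply Z.gcd_greatest. exists t. lia. exists k. lia. }
        rewrite Hg in H. destruct H as [x Hx]. lia.
      * exists (2*t*v + t + v + u + 1)%Z. subst. split; ring_simplify; lia.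
Qed.

Definition ind (q : Z) (k : nat) : R := if Z.eqb ((2 * Z.of_nat k) mod q) 0 then 1 else 0.

Lemma IZR_q_pos qn : (1 <= qn)%nat -> 0 < IZR (Z.of_nat qn).
Proof. intros. apply IZR_lt. lia. Qed.

Lemma term_eq a b q m l k : IZR q <> 0 ->
  Cmult (Cconj (zz a b q m l)) (zz a b q m (l + k)) =
  e2pi (2 * IZR a * IZR (Z.of_nat k) / IZR q * INR l +
        (2 * IZR a * IZR (Z.of_nat k) / IZR q * IZR m + (IZR a * IZR (Z.of_nat k) ^ 2 + IZR b * IZR (Z.of_nat k)) / IZR q)).
Proof. intros Hq. unfold zz. rewrite Cmult_comm, e_conj_mul. f_equal.
  replace (m + Z.of_nat (l + k))%Z with ((m + Z.of_nat l) + Z.of_nat k)%Z by lia.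
  rewrite quadf_diff by auto. rewrite plus_IZR, <- (INR_IZR_INZ l). ring. Qed.

Lemma G_inner a b qn m k : (1 <= qn)%nat -> Z.gcd a (Z.of_nat qn) = 1%Z -> Cond b (Z.of_nat qn) -> (k < qn)%nat ->
  sumN (fun l => Cmult (Cconj (zz a b (Z.of_nat qn) m l)) (zz a b (Z.of_nat qn) m (l + k))) qn
  = RtoC (INR qn * ind (Z.of_nat qn) k).
Proof. intros H1 Hg Hc Hk. set (q := Z.of_nat qn) in *. pose proof (IZR_q_pos qn H1) as Hqp. fold q in Hqp.
  assert (Hq0 : IZR q <> 0) by lra.
  rewrite (sumN_ext _ (fun l => e2pi (2 * IZR a * IZR (Z.of_nat k) / IZR q * INR l +
        (2 * IZR a * IZR (Z.of_nat k) / IZR q * IZR m + (IZR a * IZR (Z.of_nat k) ^ 2 + IZR b * IZR (Z.of_nat k)) / IZR q)))).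
  2: intros; apply term_eq; auto.
  unfold ind. destruct (Z.eqb_spec ((2 * Z.of_nat k) mod q) 0) as [E | E].
  - apply Z.mod_divide in E; [| lia].
    destruct (half_int a b q (Z.of_nat k) ltac:(lia) Hg Hc ltac:(lia) E) as [c [w [Ec Ew]]].
    apply (f_equal IZR) in Ec. apply (f_equal IZR) in Ew. rewrite !mult_IZR in Ec. rewrite plus_IZR, !mult_IZR in Ew.
    rewrite (sumN_ext _ (fun _ => RtoC 1)). rewrite sumN_const. rewrite Rmult_1_r. unfold RtoC, Cmult; simpl; f_equal; ring.
    intros l _. 
    replace (2 * IZR a * IZR (Z.of_nat k) / IZR q * INR l +
        (2 * IZR a * IZR (Z.of_nat k) / IZR q * IZR m + (IZR a * IZR (Z.of_nat k) ^ 2 + IZR b * IZR (Z.of_nat k)) / IZR q))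
      with (IZR (a * c * Z.of_nat l + a * c * m + w)). apply e_int.
    rewrite !plus_IZR, !mult_IZR, <- INR_IZR_INZ. 
    replace (2 * IZR a * IZR (Z.of_nat k)) with (IZR a * (2 * IZR (Z.of_nat k))) by ring. rewrite Ec.
    replace (IZR a * IZR (Z.of_nat k) ^ 2 + IZR b * IZR (Z.of_nat k)) with (IZR w * IZR q) by (rewrite <- Ew; ring).
    field. auto.
  - assert (E2 : ((a * (2 * Z.of_nat k)) mod q <> 0)%Z).
    { intros E2. apply E. apply Z.mod_divide in E2; [| lia]. apply Z.mod_divide; [lia|].
      apply (Z.gauss _ a). auto. rewrite Z.gcd_comm. auto. }
    destruct (e_frac_lb (a * (2 * Z.of_nat k)) q ltac:(lia) E2) as [Hx Hlb].
    rewrite linsum_zero. unfold RtoC; f_equal; ring.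
    replace (2 * IZR a * IZR (Z.of_nat k) / IZR q) with (IZR (a * (2 * Z.of_nat k)) / IZR q).
    2: { rewrite !mult_IZR. field. auto. }
    intros Z0. rewrite Z0 in Hlb. nra.
    exists (a * (2 * Z.of_nat k))%Z. rewrite !mult_IZR. unfold q. rewrite INR_IZR_INZ. field. auto.
Qed.

Lemma sumN_RtoC g n : sumN (fun k => RtoC (g k)) n = RtoC (sumR g n).
Proof. induction n; cbn [sumN sumR]. auto. rewrite IHn, RtoC_plus. auto. Qed.

Lemma sumR_mult c g n : sumR (fun k => c * g k) n = c * sumR g n.
Proof. induction n; cbn [sumR]. ring. rewrite IHn. ring. Qed.

Lemma deltaR k0 n : sumR (fun k => if Nat.eqb k k0 then 1 else 0) n = if Nat.ltb k0 n then 1 else 0.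
Proof. induction n; cbn [sumR]. reflexivity. rewrite IHn.
  destruct (Nat.eqb_spec n k0); destruct (Nat.ltb_spec k0 n); destruct (Nat.ltb_spec k0 (S n));
  try lia; subst; ring. Qed.

Lemma G_sq a b qn m : (1 <= qn)%nat -> Z.gcd a (Z.of_nat qn) = 1%Z -> Cond b (Z.of_nat qn) ->
  Cmod (sumN (zz a b (Z.of_nat qn) m) qn) ^ 2 = INR qn * sumR (ind (Z.of_nat qn)) qn.
Proof. intros H1 Hg Hc. set (G := sumN (zz a b (Z.of_nat qn) m) qn).
  assert (RtoC (Cmod G ^ 2) = RtoC (INR qn * sumR (ind (Z.of_nat qn)) qn)).
  { rewrite Cmod2_conj. rewrite Cmult_comm. unfold G at 1. rewrite sumN_conj, sumN_mult_r.
    rewrite (sumN_ext _ (fun l => sumN (fun k => Cmult (Cconj (zz a b (Z.of_nat qn) m l)) (zz a b (Z.of_nat qn) m (l + k))) qn)).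
    2: { intros l _. unfold G. rewrite <- (shift_inv a b qn m l H1). rewrite sumN_mult_l. auto. }
    rewrite sumN_swap.
    rewrite (sumN_ext _ (fun k => RtoC (INR qn * ind (Z.of_nat qn) k))).
    2: { intros k Hk. apply G_inner; auto. }
    rewrite sumN_RtoC. f_equal. apply sumR_mult. }
  apply (f_equal fst) in H. simpl in H. exact H. Qed.

Lemma ind_bounds qn : (1 <= qn)%nat -> 1 <= sumR (ind (Z.of_nat qn)) qn <= 2.
Proof. intros H1. split.
  - replace qn with (1 + (qn - 1))%nat by lia. rewrite sumR_app. cbn [sumR].
    assert (ind (Z.of_nat (1 + (qn - 1))) 0 = 1). { unfold ind. simpl Z.of_nat. rewrite Z.mul_0_r, Zmod_0_l. reflexivity. }
    assert (0 <= sumR (fun k => ind (Z.of_nat (1 + (qn - 1))) (1 + k)) (qn - 1)).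
    { apply sumR_nonneg. intros. unfold ind. destruct (Z.eqb _ _); lra. }
    lra.
  - eapply Rle_trans. apply (sumR_le _ (fun k => (if Nat.eqb k 0 then 1 else 0) + (if Nat.eqb k (qn / 2) then 1 else 0))).
    + intros k Hk. unfold ind. destruct (Z.eqb_spec ((2 * Z.of_nat k) mod Z.of_nat qn) 0) as [E|E].
      * destruct (Nat.eqb_spec k 0). destruct (Nat.eqb k (qn/2)); lra.
        destruct (Nat.eqb_spec k (qn/2)). lra. exfalso.
        assert (2 * k = qn)%nat. { apply Z.mod_divide in E; [|lia]. destruct E as [c Hc]. assert (c = 1)%Z by nia. subst. lia. }
        apply n0. rewrite <- H. rewrite Nat.mul_comm, Nat.div_mul; lia.
      * destruct (Nat.eqb k 0); destruct (Nat.eqb k (qn/2)); lra.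
    + assert (forall g1 g2 n, sumR (fun k => g1 k + g2 k) n = sumR g1 n + sumR g2 n).
      { intros. induction n; cbn [sumR]. ring. rewrite IHn. ring. }
      rewrite H, !deltaR. destruct (Nat.ltb 0 qn); destruct (Nat.ltb (qn/2) qn); lra.
Qed.

Lemma inner_delta (W : nat -> C) L j l : (j < 2 * L)%nat -> (l < L)%nat ->
  sumN (fun k => if Nat.eqb j (k + L - l) then W k else RtoC 0) L
  = if andb (Nat.leb (L - j) l) (Nat.ltb l (2 * L - j)) then W (l + j - L)%nat else RtoC 0.
Proof. intros Hj Hl. destruct (Nat.leb_spec L (l + j)).
  - rewrite (sumN_ext _ (fun k => if Nat.eqb k (l + j - L) then W k else RtoC 0)).
    2: { intros k Hk. destruct (Nat.eqb_spec j (k + L - l)); destruct (Nat.eqb_spec k (l + j - L)); try lia; auto. }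
    rewrite delta_sum. destruct (Nat.ltb_spec (l + j - L) L); destruct (Nat.leb_spec (L - j) l); destruct (Nat.ltb_spec l (2 * L - j)); simpl; try lia; auto.
  - rewrite (sumN_ext _ (fun _ => RtoC 0)), sumN_zero.
    2: { intros k Hk. destruct (Nat.eqb_spec j (k + L - l)); try lia; auto. }
    destruct (Nat.leb_spec (L - j) l); simpl; try lia; auto.
Qed.

Lemma weyl_expand (y : nat -> C) L :
  Cmult (sumN y L) (Cconj (sumN y L)) =
  sumN (fun j => sumN (fun l => if andb (Nat.leb (L - j) l) (Nat.ltb l (2 * L - j))
                                 then Cmult (y (l + j - L)%nat) (Cconj (y l)) else RtoC 0) L) (2 * L).
Proof.
  rewrite sumN_conj, sumN_mult_l.
  rewrite (sumN_ext _ (fun l => sumN (fun k => sumN (fun j => if Nat.eqb j (k + L - l) then Cmult (y k) (Cconj (y l)) else RtoC 0) (2 * L)) L)).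
  2: { intros l Hl. rewrite sumN_mult_r. apply sumN_ext. intros k Hk. rewrite delta_sum.
       destruct (Nat.ltb_spec (k + L - l) (2 * L)); try lia; auto. }
  rewrite (sumN_ext _ (fun l => sumN (fun j => sumN (fun k => if Nat.eqb j (k + L - l) then Cmult (y k) (Cconj (y l)) else RtoC 0) L) (2 * L))).
  2: { intros l Hl. apply sumN_swap. }
  rewrite sumN_swap. apply sumN_ext. intros j Hj. apply sumN_ext. intros l Hl.
  apply (inner_delta (fun k => Cmult (y k) (Cconj (y l)))); auto.
Qed.

Definition Pm (a' : Z) (dn : nat) (h : Z) : nat := Z.to_nat ((a' * h) mod Z.of_nat dn).
Definition Fb (qn dn r : nat) : R := if Nat.eqb r 0 then INR qn else INR dn / INR r + INR dn / (INR dn - INR r).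

Lemma term_eq2 a b q m l k h : IZR q <> 0 -> Z.of_nat k = (Z.of_nat l + h)%Z ->
  Cmult (zz a b q m k) (Cconj (zz a b q m l)) =
  e2pi (2 * IZR a * IZR h / IZR q * INR l +
        (2 * IZR a * IZR h / IZR q * IZR m + (IZR a * IZR h ^ 2 + IZR b * IZR h) / IZR q)).
Proof. intros Hq Hk. unfold zz. rewrite e_conj_mul. f_equal.
  replace (m + Z.of_nat k)%Z with ((m + Z.of_nat l) + h)%Z by lia.
  rewrite quadf_diff by auto. rewrite plus_IZR, <- (INR_IZR_INZ l). ring. Qed.

Lemma Fb_bound qn dn r x : (0 < r < dn)%nat -> x = INR r / INR dn -> 2 / (2 * x * (1 - x)) = Fb qn dn r.
Proof. intros Hr Hx. unfold Fb. destruct (Nat.eqb_spec r 0). lia. subst x.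
  assert (0 < INR r) by (apply lt_0_INR; lia). assert (INR r < INR dn) by (apply lt_INR; lia).
  field. repeat split; lra. Qed.

Lemma Tj_bound a b qn m dn a' L j :
  (1 <= qn)%nat -> (1 <= dn)%nat -> (L <= qn)%nat -> (j < 2 * L)%nat ->
  (forall h, 2 * IZR a * IZR h / IZR (Z.of_nat qn) = IZR (a' * h) / IZR (Z.of_nat dn)) ->
  Cmod (sumN (fun l => if andb (Nat.leb (L - j) l) (Nat.ltb l (2 * L - j))
           then Cmult (zz a b (Z.of_nat qn) m (l + j - L)%nat) (Cconj (zz a b (Z.of_nat qn) m l)) else RtoC 0) L)
  <= Fb qn dn (Pm a' dn (Z.of_nat j - Z.of_nat L)).
Proof. intros Hq Hd HL Hj Hal. set (h := (Z.of_nat j - Z.of_nat L)%Z).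
  pose proof (IZR_q_pos qn Hq) as Hqp. set (q := Z.of_nat qn) in *. assert (Hq0 : IZR q <> 0) by lra.
  set (al := 2 * IZR a * IZR h / IZR q).
  set (be := al * IZR m + (IZR a * IZR h ^ 2 + IZR b * IZR h) / IZR q).
  rewrite (sumN_ext _ (fun l => if andb (Nat.leb (L - j) l) (Nat.ltb l (2 * L - j)) then e2pi (al * INR l + be) else RtoC 0)).
  2: { intros l Hl. destruct (Nat.leb_spec (L - j) l); destruct (Nat.ltb_spec l (2 * L - j)); simpl; auto.
       apply term_eq2; auto. unfold h. lia. }
  unfold Fb, Pm. destruct (Nat.eqb_spec (Z.to_nat ((a' * h) mod Z.of_nat dn)) 0) as [E|E].
  - eapply Rle_trans. apply sumN_tri. eapply Rle_trans. apply (sumR_le _ (fun _ => 1)).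
    + intros l _. destruct (andb _ _). rewrite e_mod; lra. rewrite Cmod_0; lra.
    + rewrite sumR_const, Rmult_1_r. apply le_INR. auto.
  - rewrite interval_sum.
    rewrite (sumN_ext _ (fun i => e2pi (al * INR i + (al * INR (L - j) + be)))).
    2: { intros i _. f_equal. rewrite plus_INR. ring. }
    assert (Hd0 : (0 < Z.of_nat dn)%Z) by lia.
    pose proof (Z.mod_pos_bound (a' * h) (Z.of_nat dn) Hd0).
    assert (Hz : ((a' * h) mod Z.of_nat dn <> 0)%Z) by (intros Z0; apply E; rewrite Z0; auto).
    destruct (e_frac_lb (a' * h) (Z.of_nat dn) Hd0 Hz) as [Hx Hlb].
    assert (Eal : al = IZR (a' * h) / IZR (Z.of_nat dn)) by (unfold al; apply Hal).
    rewrite <- Eal in Hlb.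
    eapply Rle_trans. apply geo_bound. nra.
    set (x := IZR ((a' * h) mod Z.of_nat dn) / IZR (Z.of_nat dn)) in *.
    eapply Rle_trans with (2 / (2 * x * (1 - x))).
    + apply Rmult_le_compat_l. lra. apply Rinv_le_contravar. nra. auto.
    + rewrite (Fb_bound qn dn (Z.to_nat ((a' * h) mod Z.of_nat dn)) x). unfold Fb.
      destruct (Nat.eqb_spec (Z.to_nat ((a' * h) mod Z.of_nat dn)) 0); [lia|]. lra. lia.
      unfold x. rewrite INR_IZR_INZ, Z2Nat.id by lia. rewrite <- INR_IZR_INZ. rewrite INR_IZR_INZ. reflexivity.
Qed.

Lemma fold_perm l1 l2 : Permutation l1 l2 -> fold_right Rplus 0 l1 = fold_right Rplus 0 l2.
Proof. induction 1; simpl; auto. rewrite IHPermutation; auto. ring. congruence. Qed.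

Lemma Pm_lt a' dn h : (1 <= dn)%nat -> (Pm a' dn h < dn)%nat.
Proof. intros H. unfold Pm. pose proof (Z.mod_pos_bound (a' * h) (Z.of_nat dn) ltac:(lia)). lia. Qed.

Lemma perm_block a' dn s : (1 <= dn)%nat -> Z.gcd (Z.of_nat dn) a' = 1%Z ->
  Permutation (map (fun i => Pm a' dn (s + Z.of_nat i)) (seq 0 dn)) (seq 0 dn).
Proof. intros H1 Hg. apply Permutation_map_same_l.
  - apply FinFun.Injective_map_NoDup_in. 2: apply seq_NoDup.
    intros x y Hx Hy E. apply in_seq in Hx. apply in_seq in Hy. unfold Pm in E.
    pose proof (Z.mod_pos_bound (a' * (s + Z.of_nat x)) (Z.of_nat dn) ltac:(lia)).
    pose proof (Z.mod_pos_bound (a' * (s + Z.of_nat y)) (Z.of_nat dn) ltac:(lia)).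
    apply Z2Nat.inj in E; try lia.
    apply Z.cong_iff_0 in E. apply Z.mod_divide in E; [|lia].
    replace (a' * (s + Z.of_nat x) - a' * (s + Z.of_nat y))%Z with (a' * (Z.of_nat x - Z.of_nat y))%Z in E by ring.
    apply Z.gauss in E; auto. destruct E as [c Hc]. assert (c = 0)%Z by nia. subst. lia.
  - intros x Hx. apply in_map_iff in Hx. destruct Hx as [i [<- _]]. apply in_seq. pose proof (Pm_lt a' dn (s + Z.of_nat i) H1). lia.
Qed.

Lemma block_sum (g : nat -> R) a' dn s : (1 <= dn)%nat -> Z.gcd (Z.of_nat dn) a' = 1%Z ->
  sumR (fun i => g (Pm a' dn (s + Z.of_nat i))) dn = sumR g dn.
Proof. intros H1 Hg. rewrite !sumR_fold.
  replace (map (fun i => g (Pm a' dn (s + Z.of_nat i))) (seq 0 dn)) with (map g (map (fun i => Pm a' dn (s + Z.of_nat i)) (seq 0 dn))) by (rewrite map_map; auto).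
  apply fold_perm. apply Permutation_map. apply perm_block; auto. Qed.

Lemma Fb_nonneg qn dn r : (r < dn)%nat -> 0 <= Fb qn dn r.
Proof. intros H. unfold Fb. destruct (Nat.eqb_spec r 0). apply pos_INR.
  assert (0 < INR r) by (apply lt_0_INR; lia). assert (INR r < INR dn) by (apply lt_INR; lia).
  assert (0 < INR dn / INR r) by (apply Rdiv_lt_0_compat; lra).
  assert (0 < INR dn / (INR dn - INR r)) by (apply Rdiv_lt_0_compat; lra). lra. Qed.

Lemma sum_j_bound qn dn a' L : (1 <= dn)%nat -> Z.gcd (Z.of_nat dn) a' = 1%Z -> (L <= 2 * dn)%nat ->
  sumR (fun j => Fb qn dn (Pm a' dn (Z.of_nat j - Z.of_nat L))) (2 * L) <= 4 * sumR (Fb qn dn) dn.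
Proof. intros H1 Hg HL.
  set (Phi := fun t : nat => Fb qn dn (Pm a' dn (Z.of_nat t - Z.of_nat (2 * dn)))).
  assert (Hnn : forall t, 0 <= Phi t) by (intros; apply Fb_nonneg, Pm_lt; auto).
  assert (Hb : forall n c, sumR (fun i => Phi (c + i)%nat) (n * dn) = INR n * sumR (Fb qn dn) dn).
  { induction n; intros c. simpl. ring. replace (S n * dn)%nat with (dn + n * dn)%nat by lia.
    rewrite sumR_app. rewrite (sumR_ext (fun k => Phi (c + (dn + k))%nat) (fun i => Phi ((c + dn) + i)%nat)) by (intros k _; cbv beta; rewrite Nat.add_assoc; reflexivity).
    rewrite IHn.
    rewrite (sumR_ext (fun i => Phi (c + i)%nat) (fun i => Fb qn dn (Pm a' dn ((Z.of_nat c - Z.of_nat (2 * dn)) + Z.of_nat i)))).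
    2: { intros k _. unfold Phi. f_equal. f_equal. lia. }
    rewrite block_sum by auto. rewrite S_INR. ring. }
  pose proof (Hb 4%nat 0%nat) as H4. replace (INR 4) with 4 in H4 by (simpl; ring).
  rewrite (sumR_ext (fun i => Phi (0 + i)%nat) Phi) in H4 by (intros; reflexivity).
  replace (4 * dn)%nat with ((2 * dn - L) + (2 * L + (2 * dn - L)))%nat in H4 by lia.
  rewrite !sumR_app in H4.
  rewrite (sumR_ext _ (fun k => Phi (2 * dn - L + k)%nat)).
  2: { intros k _. unfold Phi. f_equal. f_equal. lia. }
  match type of H4 with ?A + (?B + ?C) = _ => assert (0 <= A) by (apply sumR_nonneg; intros; apply Hnn);
     assert (0 <= C) by (apply sumR_nonneg; intros; apply Hnn) end.
  lra.
Qed.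

Definition Hs (n : nat) : R := sumR (fun i => 1 / (1 + INR i)) n.

Lemma ln_le_xm1 y : 0 < y -> ln y <= y - 1.
Proof. intros H. pose proof (exp_ineq1_le (ln y)). rewrite exp_ln in H0 by auto. lra. Qed.

Lemma harm n : Hs (S n) <= 1 + ln (INR (S n)).
Proof. induction n.
  - unfold Hs. simpl. rewrite ln_1. lra.
  - unfold Hs in *. cbn [sumR] in *. set (x := INR (S n)) in *.
    assert (Hx : 1 <= x) by (unfold x; rewrite S_INR; pose proof (pos_INR n); lra).
    replace (INR (S (S n))) with (x + 1) by (unfold x; rewrite (S_INR (S n)); ring).
    replace (1 + x) with (x + 1) by ring.
    pose proof (ln_le_xm1 (x / (x + 1)) ltac:(apply Rdiv_lt_0_compat; lra)).
    rewrite ln_div in H by lra.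
    assert (x / (x + 1) - 1 = - (1 / (x + 1))) by (field; lra). lra.
Qed.

Lemma reflectR g n : sumR g n = sumR (fun i => g (n - 1 - i)%nat) n.
Proof. induction n. reflexivity.
  assert (E := sumR_app (fun i => g (S n - 1 - i)%nat) 1 n).
  replace (1 + n)%nat with (S n) in E by lia. rewrite E. cbn [sumR]. rewrite IHn.
  replace (S n - 1 - 0)%nat with n by lia.
  rewrite (sumR_ext (fun k => g (S n - 1 - (1 + k))%nat) (fun i => g (n - 1 - i)%nat)).
  ring. intros. f_equal. lia. Qed.

Lemma sumFb qn dn : (1 <= dn)%nat -> (dn <= qn)%nat ->
  sumR (Fb qn dn) dn <= INR qn + 2 * INR dn * (1 + ln (INR qn)).
Proof. intros H1 H2. set (n := (dn - 1)%nat).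
  replace dn with (1 + n)%nat at 2 by lia. rewrite sumR_app. cbn [sumR]. unfold Fb at 1. simpl Nat.eqb.
  rewrite (sumR_ext _ (fun i => INR dn * (1 / (1 + INR i)) + INR dn * (1 / (INR dn - (1 + INR i))))).
  2: { intros i Hi. unfold Fb. destruct (Nat.eqb_spec (1 + i) 0). lia. rewrite plus_INR. simpl INR. field. split.
       assert (INR (1 + i) < INR dn) by (apply lt_INR; lia). rewrite plus_INR in H. simpl INR in H. lra.
       pose proof (pos_INR i); lra. }
  assert (Hsplit : forall g1 g2 m, sumR (fun k => g1 k + g2 k) m = sumR g1 m + sumR g2 m).
  { intros. induction m; cbn [sumR]. ring. rewrite IHm. ring. }
  rewrite Hsplit, !sumR_mult.
  rewrite (reflectR (fun i => 1 / (INR dn - (1 + INR i)))).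
  rewrite (sumR_ext (fun i => 1 / (INR dn - (1 + INR (n - 1 - i)))) (fun i => 1 / (1 + INR i))).
  2: { intros i Hi. f_equal. replace (INR dn) with (INR (n - 1 - i + i + 1 + 1)) by (f_equal; lia).
       rewrite !plus_INR. simpl INR. ring. }
  fold (Hs n). assert (Hn : (n = dn - 1)%nat) by reflexivity. clearbody n.
  assert (Hb : Hs n <= 1 + ln (INR qn)).
  { assert (0 <= ln (INR qn)). { rewrite <- ln_1. apply ln_le. lra. replace 1 with (INR 1) by reflexivity. apply le_INR. lia. }
    destruct n. unfold Hs. simpl. lra.
    eapply Rle_trans. apply harm. assert (ln (INR (S n)) <= ln (INR qn)).
    { apply ln_le. apply lt_0_INR. lia. apply le_INR. lia. } lra. }
  assert (0 <= INR dn) by apply pos_INR. simpl INR. nra.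
Qed.

Lemma da_exists a qn : (1 <= qn)%nat -> Z.gcd a (Z.of_nat qn) = 1%Z ->
  exists dn a', (1 <= dn)%nat /\ (dn <= qn)%nat /\ (qn <= 2 * dn)%nat /\ Z.gcd (Z.of_nat dn) a' = 1%Z /\
    (forall h, 2 * IZR a * IZR h / IZR (Z.of_nat qn) = IZR (a' * h) / IZR (Z.of_nat dn)).
Proof. intros H1 Hg. apply Zgcd_1_rel_prime in Hg. apply rel_prime_sym in Hg.
  destruct (Nat.Even_or_Odd qn) as [[dn Hd] | [dn Hd]].
  - exists dn, a. repeat split; try lia.
    + apply Zgcd_1_rel_prime. apply (rel_prime_div (Z.of_nat qn)); auto. exists 2%Z. lia.
    + intros h. subst qn. rewrite Nat2Z.inj_mul, mult_IZR, mult_IZR. simpl (IZR (Z.of_nat 2)).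
      field. apply not_0_IZR. lia.
  - exists qn, (2 * a)%Z. repeat split; try lia.
    + apply Zgcd_1_rel_prime. apply rel_prime_mult; auto.
      apply bezout_rel_prime. apply (Bezout_intro _ _ _ 1 (- Z.of_nat dn)). lia.
    + intros h. rewrite !mult_IZR. field. apply not_0_IZR. lia.
Qed.

Lemma Cmod_sq_conj T : Cmod T ^ 2 = Cmod (Cmult T (Cconj T)).
Proof. rewrite <- Cmod2_conj, Cmod_R, Rabs_right; auto. apply Rle_ge, pow2_ge_0. Qed.

Lemma tail_bound a b qn m L : (1 <= qn)%nat -> Z.gcd a (Z.of_nat qn) = 1%Z -> (L <= qn)%nat ->
  Cmod (sumN (zz a b (Z.of_nat qn) m) L) ^ 2 <= 4 * (INR qn + 2 * INR qn * (1 + ln (INR qn))).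
Proof. intros H1 Hg HL.
  destruct (da_exists a qn H1 Hg) as [dn [a' [Hd1 [Hd2 [Hd3 [Hg' Hal]]]]]].
  rewrite Cmod_sq_conj, weyl_expand.
  eapply Rle_trans. apply sumN_tri.
  eapply Rle_trans. apply (sumR_le _ (fun j => Fb qn dn (Pm a' dn (Z.of_nat j - Z.of_nat L)))).
  { intros j Hj. apply Tj_bound; auto. }
  eapply Rle_trans. apply sum_j_bound; auto. lia.
  pose proof (sumFb qn dn Hd1 Hd2).
  assert (INR dn <= INR qn) by (apply le_INR; auto).
  assert (0 <= ln (INR qn)). { rewrite <- ln_1. apply ln_le. lra. replace 1 with (INR 1) by reflexivity. apply le_INR. lia. }
  assert (0 <= INR dn) by apply pos_INR. nra.
Qed.

Lemma rev_tri X T : Rabs (Cmod (Cplus X T) - Cmod X) <= Cmod T.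
Proof. apply Rabs_le. split.
  - pose proof (Cmod_triangle (Cplus X T) (Copp T)). rewrite Cmod_opp in H.
    replace (Cplus (Cplus X T) (Copp T)) with X in H by ring. lra.
  - pose proof (Cmod_triangle X T). lra. Qed.

Theorem lemma2p2 :
  exists K : R, 0 <= K /\
  forall (m : Z) (n : nat) (a b q : Z),
    (1 <= q)%Z ->
    Z.gcd a q = 1%Z ->
    (Z.odd q = true
     \/ (Z.modulo q 4 = 0%Z /\ Z.even b = true)
     \/ (Z.modulo q 4 = 2%Z /\ Z.odd b = true)) ->
    exists C : R, 1 / 2 <= C <= sqrt 2 /\
      Rabs (Cmod (expsum (quadf a b q) m n) - C * INR n / sqrt (IZR q))
        <= K * sqrt (IZR q * ln (IZR q)).
Proof.
  exists 8. split. lra. intros m n a b q Hq Hg Hc.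
  set (qn := Z.to_nat q). assert (Eq : q = Z.of_nat qn) by (unfold qn; lia).
  assert (H1 : (1 <= qn)%nat) by lia. clearbody qn. subst q.
  change (Cond b (Z.of_nat qn)) in Hc.
  rewrite <- INR_IZR_INZ.
  set (G := sumN (zz a b (Z.of_nat qn) m) qn).
  pose proof (G_sq a b qn m H1 Hg Hc) as HG. fold G in HG.
  pose proof (ind_bounds qn H1) as HN.
  assert (Hqp : 1 <= INR qn) by (replace 1 with (INR 1) by reflexivity; apply le_INR; auto).
  assert (HG1 : INR qn <= Cmod G ^ 2 <= 2 * INR qn) by (rewrite HG; nra).
  pose proof (Cmod_ge_0 G) as HG0.
  set (sq := sqrt (INR qn)).
  assert (Hsq : sq * sq = INR qn) by (apply sqrt_sqrt; lra).
  assert (Hsq0 : 0 < sq) by (apply sqrt_lt_R0; lra).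
  exists (Cmod G / sq). split.
  { assert (E : (Cmod G / sq) ^ 2 = Cmod G ^ 2 / INR qn) by (rewrite <- Hsq; field; lra).
    assert (0 <= Cmod G / sq) by (apply Rdiv_le_0_compat; lra).
    assert (1 <= (Cmod G / sq) ^ 2 <= 2).
    { rewrite E. split. apply (Rmult_le_reg_r (INR qn)); try lra. unfold Rdiv. rewrite Rmult_assoc, Rinv_l; lra.
      apply (Rmult_le_reg_r (INR qn)); try lra. unfold Rdiv. rewrite Rmult_assoc, Rinv_l; lra. }
    split. nra. rewrite <- (sqrt_pow2 (Cmod G / sq)) by auto. apply sqrt_le_1_alt. lra. }
  rewrite expsum_sumN. fold (zz a b (Z.of_nat qn) m).
  set (N := (n / qn)%nat). set (L := (n mod qn)%nat).
  assert (En : n = (N * qn + L)%nat) by (unfold N, L; rewrite Nat.mul_comm; apply Nat.div_mod_eq).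
  assert (HL : (L < qn)%nat) by (unfold L; apply Nat.mod_upper_bound; lia).
  clearbody N L. subst n.
  rewrite decomp by auto. fold G.
  set (T := sumN (zz a b (Z.of_nat qn) (m + Z.of_nat (N * qn))) L).
  assert (EC : Cmod G / sq * INR (N * qn + L) / sq = INR N * Cmod G + Cmod G * (INR L / INR qn)).
  { rewrite plus_INR, mult_INR. rewrite <- Hsq. field. lra. }
  rewrite EC.
  assert (EM : Cmod (Cmult (RtoC (INR N)) G) = INR N * Cmod G).
  { rewrite Cmod_mult, Cmod_R, Rabs_right; auto. apply Rle_ge, pos_INR. }
  pose proof (rev_tri (Cmult (RtoC (INR N)) G) T) as Htri. rewrite EM in Htri.
  assert (HLq : 0 <= INR L / INR qn <= 1).
  { split. apply Rdiv_le_0_compat. apply pos_INR. lra.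
    assert (INR L <= INR qn) by (apply le_INR; lia).
    apply (Rmult_le_reg_r (INR qn)); try lra. unfold Rdiv. rewrite Rmult_assoc, Rinv_l; lra. }
  assert (Hb : Cmod T + Cmod G * (INR L / INR qn) <= 8 * sqrt (INR qn * ln (INR qn))).
  { pose proof (sqrt_pos (INR qn * ln (INR qn))). destruct L as [|L'].
    - unfold T. simpl sumN. rewrite Cmod_0. simpl INR. unfold Rdiv. rewrite Rmult_0_l, Rmult_0_r. lra.
    - assert (Hq2 : 2 <= INR qn) by (replace 2 with (INR 2) by (simpl; ring); apply le_INR; lia).
      assert (Hln : / 2 < ln (INR qn)) by (pose proof ln_lt_2; pose proof (ln_le 2 (INR qn) ltac:(lra) Hq2); lra).
      set (X := INR qn * ln (INR qn)).
      assert (HX : 0 <= X) by (unfold X; nra).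
      set (s := sqrt X) in *. assert (Hs : s * s = X) by (apply sqrt_sqrt; auto).
      pose proof (tail_bound a b qn (m + Z.of_nat (N * qn)) (S L') H1 Hg ltac:(lia)) as HT. fold T in HT.
      assert (HT2 : Cmod T ^ 2 <= 32 * X) by (unfold X; nra). replace (Cmod T ^ 2) with (Cmod T * Cmod T) in HT2 by ring.
      assert (HG2 : Cmod G ^ 2 <= 4 * X) by (unfold X; nra). replace (Cmod G ^ 2) with (Cmod G * Cmod G) in HG2 by ring.
      pose proof (Cmod_ge_0 T).
      assert (HT3 : Cmod T * Cmod T <= 32 * (s * s)) by (rewrite Hs; lra).
      assert (HG3 : Cmod G * Cmod G <= 4 * (s * s)) by (rewrite Hs; lra).
      assert (0 <= s) by apply sqrt_pos.
      assert (Cmod T <= 6 * s) by (apply Rnot_lt_le; intro; nra).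
      assert (Cmod G <= 2 * s) by (apply Rnot_lt_le; intro; nra).
      assert (Cmod G * (INR (S L') / INR qn) <= Cmod G) by nra.
      lra. }
  apply Rabs_le. 
  pose proof (Rle_abs (Cmod (Cplus (Cmult (RtoC (INR N)) G) T) - INR N * Cmod G)).
  pose proof (Rle_abs (- (Cmod (Cplus (Cmult (RtoC (INR N)) G) T) - INR N * Cmod G))). rewrite Rabs_Ropp in H0.
  assert (0 <= Cmod G * (INR L / INR qn)) by nra.
  split; lra.
Qed.
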